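(* Let $p$ be an odd prime, $G$ a finite group and $P$ a Sylow $p$-subgroup of $G$. Assume that $P$ is nontrivial and that $N_G(P)/PC_G(P)$ has odd order. Then no nonidentity element of $Z(P)$ is real in $G$.
   Context: An element $t \in G$ is real in $G$ if $t$ is $G$-conjugate to $t^{-1}$. $Z(P)$ is the center of $P$. *)

(* Defs.v *)
From mathcomp Require Import all_boot all_fingroup all_solvable.
Set Implicit Arguments. Unset Strict Implicit. Unset Printing Implicit Defensive.
Local Open Scope group_scope.

Definition real_in (gT : finGroupType) (G : {set gT}) (t : gT) : Prop :=
  exists2 g, g \in G & t ^ g = t^-1.

(* Main.v *)
Require Import Defs.
From mathcomp Require Import all_boot all_fingroup all_solvable.
Local Open Scope group_scope.

Theorem lemma2p3 (gT : finGroupType) (p : nat) (G P : {group gT}) :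
  prime p -> odd p -> P \in 'Syl_p(G) -> P :!=: 1 ->
  odd #|'N_G(P) / (P <*> 'C_G(P))| ->
  forall t, t \in 'Z(P) -> t != 1 -> ~ real_in G t.
Proof.
move=> pr_p odd_p sylP _ oddQ t Zt nt1 [g Gg tg].
have sylP' : p.-Sylow(G) P by rewrite inE in sylP.
have sPG : P \subset G := pHall_sub sylP'.
move: (Zt); rewrite inE => /andP[Pt cPt].
have sPK : P \subset 'C_G[t] by rewrite subsetI sPG sub_cent1.
have sKG : 'C_G[t] \subset G := subsetIl _ _.
have sPgK : P :^ g \subset 'C_G[t].
  rewrite subsetI -(conjGid Gg) conjSg sPG /= sub_cent1 centJ mem_conjg.
  have -> : t ^ g^-1 = t^-1.
    by rewrite -{1}[t]invgK -tg conjVg -conjgM mulgV conjg1.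
  by rewrite groupV.
have sylPK : p.-Sylow('C_G[t]) P := pHall_subl sPK sKG sylP'.
have sylPgK : p.-Sylow('C_G[t]) (P :^ g)%G.
  apply: (pHall_subl sPgK sKG); by rewrite pHallJ.
have [c Kc defP] := Sylow_trans sylPgK sylPK.
move: Kc; rewrite inE => /andP[Gc ctc].
set n := g * c.
have Gn : n \in G by rewrite groupM.
have nPn : n \in 'N(P) by apply/normP; rewrite conjsgM -defP.
have tn : t ^ n = t^-1.
  by rewrite conjgM tg conjVg conjgE -(cent1P ctc) mulKg.
set H := P <*> 'C_G(P).
have nHn : n \in 'N(H).
  rewrite -sub1set; apply: normsY; rewrite sub1set //.
  have : n \in 'N_G(P) by rewrite inE Gn.
  by move=> nN; apply: (subsetP (subcent_norm G P)).
have cHt : H \subset 'C[t].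
  rewrite join_subG sub_cent1 cPt /=.
  rewrite sub_cent1; apply/centP => x /setIP[_ cx].
  by apply: esym; apply: (centP cx).
have npow : forall m, t ^ (n ^+ m) = if odd m then t^-1 else t.
  elim=> [|m IH]; first by rewrite expg0 conjg1.
  rewrite expgSr conjgM IH /=; case: (odd m) => /=.
    by rewrite conjVg tn invgK.
  done.
have Nn : n \in 'N_G(P) :&: 'N(H) by apply/setIP; split=> //; apply/setIP.
have oc : odd #[coset H n].
  have nN : n \in 'N_G(P) by apply/setIP.
  exact: (dvdn_odd (order_dvdG (mem_quotient H nN)) oddQ).
have : n ^+ #[coset H n] \in H.
  apply: coset_idr; first by rewrite groupX.
  by rewrite morphX // expg_order.
move=> /(subsetP cHt) /cent1P ct.
have : t ^ (n ^+ #[coset H n]) = t by rewrite conjgE -ct mulKg.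
rewrite npow oc => tinv.
have t2 : t ^+ 2 == 1 by rewrite expgS expg1 -{1}tinv mulVg.
rewrite -order_dvdn in t2.
have pt : p.-elt t := mem_p_elt (pHall_pgroup sylP') Pt.
have o1 : #[t] != 1%N by rewrite order_eq1.
have o2 : #[t] = 2%N.
  have := dvdn_leq (isT : 0 < 2) t2.
  have := order_gt0 t.
  by move: o1; case: #[t] => [|[|[|k]]].
move: pt; rewrite /p_elt o2 pnatE // inE => /eqP p2.
by rewrite -p2 in odd_p.
Qed.
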